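(* Let $G$ be a simple graph. (1) If $\mathcal{B}$ is a strongly disjoint set of bouquets of $G$ of type $(i,j)$, then $\mathcal{E}(\mathcal{B})$ is a self disjoint set in $G$ of type $(i,i+j)$. Conversely, if $\mathcal{S}$ is a self disjoint set in $G$ of type $(i,i+j)$, then $\mathcal{S}=\mathcal{E}(\mathcal{B})$ for some strongly disjoint set of bouquets $\mathcal{B}$ of $G$ of type $(i,j)$. (2) Every self semi-disjoint set in $G$ is a self disjoint set. (3) $d_{1,G}=d_{2,G}=d_G$ and $d'_{1,G}=d'_{2,G}=d'_G$.
   Context: A simple graph $G$ is a simple hypergraph all of whose edges have two elements. A bouquet of $G$ is a subgraph with vertex set $\{x,y_1,\dots,y_t\}$, $t\ge1$, and edges $\{x,y_\ell\}$ ($\ell=1,\dots,t$) of $G$; $x$ is the root, the $y_\ell$ are the flowers and the edges $\{x,y_\ell\}$ the stems. A set $\mathcal{B}=\{B_1,\dots,B_j\}$ of bouquets of $G$ is strongly disjoint if the $B_k$ are pairwise vertex-disjoint and one can choose a stem from each $B_k$ so that these stems form an induced matching of $G$; it has type $(i,j)$ if the total number of flowers is $i$ (and $j$ is the number of bouquets). $\mathcal{E}(\mathcal{B})$ denotes the set of all edges of the bouquets in $\mathcal{B}$. $d_G$ (resp. $d'_G$) is the maximum $i$ (resp. maximum $j$) over strongly disjoint sets of bouquets of $G$ of type $(i,j)$. For a family $\mathcal{S}=\{S_1,\dots,S_i\}$ of distinct edges, its type is $(i,j)$ with $j=|\bigcup_\ell S_\ell|$. $\mathcal{S}$ is a semi-induced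 matching if no edge outside $\mathcal{S}$ is contained in $\bigcup_\ell S_\ell$, an induced matching if moreover its edges are pairwise disjoint. $\mathcal{S}$ is a self disjoint set (resp. self semi-disjoint set) if (i) for all $k$, $S_k\nsubseteq\bigcup_{\ell\neq k}S_\ell$, and (ii) there is an induced matching (resp. semi-induced matching) $\mathcal{S}_0\subseteq\mathcal{S}$ such that for each $S_\ell\in\mathcal{S}\setminus\mathcal{S}_0$ there is $S'\in\mathcal{S}_0$ with $|S_\ell\setminus S'|=1$. $d_{1,G}$ (resp. $d_{2,G}$) is the maximum size of a self disjoint (resp. self semi-disjoint) set, and $d'_{1,G}$ (resp. $d'_{2,G}$) is the maximum of $j-i$ over self disjoint (resp. self semi-disjoint) sets of type $(i,j)$. *)

(* Defs.v *)
From mathcomp Require Import all_boot.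
Set Implicit Arguments. Unset Strict Implicit. Unset Printing Implicit Defensive.

Section Graph.
Variables (T : finType) (e : rel T).

Definition is_edge (s : {set T}) : bool :=
  (#|s| == 2) && [forall x in s, forall y in s, (x != y) ==> e x y].

Definition edge_family (S : {set {set T}}) : bool := [forall s in S, is_edge s].

Definition semi_induced_matching (S : {set {set T}}) : bool :=
  edge_family S && [forall s, (is_edge s && (s \subset cover S)) ==> (s \in S)].

Definition induced_matching (S : {set {set T}}) : bool :=
  semi_induced_matching S &&
  [forall s in S, forall s' in S, (s != s') ==> [disjoint s & s']].

Definition self_cond (S : {set {set T}}) : bool :=
  [forall s in S, ~~ (s \subset cover (S :\ s))].

Definition self_disjoint (S : {set {set T}}) : bool :=
  edge_family S && self_cond S &&
  [exists S0 : {set {set T}}, (S0 \subset S) && induced_matching S0 &&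
     [forall s in S :\: S0, exists s' in S0, #|s :\: s'| == 1]].

Definition self_semi_disjoint (S : {set {set T}}) : bool :=
  edge_family S && self_cond S &&
  [exists S0 : {set {set T}}, (S0 \subset S) && semi_induced_matching S0 &&
     [forall s in S :\: S0, exists s' in S0, #|s :\: s'| == 1]].

(* a bouquet is represented by (root, set of flowers) *)
Definition bouquet (b : T * {set T}) : bool :=
  (b.2 != set0) && [forall y in b.2, e b.1 y].

Definition bvert (b : T * {set T}) : {set T} := b.1 |: b.2.

Definition strongly_disjoint (B : {set T * {set T}}) : bool :=
  [forall b in B, bouquet b] &&
  [forall b in B, forall b' in B, (b != b') ==> [disjoint bvert b & bvert b']] &&
  [exists f : {ffun T * {set T} -> T},
     [forall b in B, f b \in b.2] && induced_matching [set [set b.1; f b] | b in B]].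

Definition nflowers (B : {set T * {set T}}) : nat := \sum_(b in B) #|b.2|.

Definition bedges (B : {set T * {set T}}) : {set {set T}} :=
  [set [set p.1; p.2] | p in [set p : T * T | [exists b in B, (p.1 == b.1) && (p.2 \in b.2)]]].

Definition dG : nat := \max_(B : {set T * {set T}} | strongly_disjoint B) nflowers B.
Definition d'G : nat := \max_(B : {set T * {set T}} | strongly_disjoint B) #|B|.
Definition d1G : nat := \max_(S : {set {set T}} | self_disjoint S) #|S|.
Definition d2G : nat := \max_(S : {set {set T}} | self_semi_disjoint S) #|S|.
(* j - i for type (i,j); truncation is harmless since the empty family gives 0 *)
Definition d'1G : nat := \max_(S : {set {set T}} | self_disjoint S) (#|cover S| - #|S|).
Definition d'2G : nat := \max_(S : {set {set T}} | self_semi_disjoint S) (#|cover S| - #|S|).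

End Graph.

(* Main.v *)
Require Import Defs.
From mathcomp Require Import all_boot.
Set Implicit Arguments. Unset Strict Implicit. Unset Printing Implicit Defensive.

Lemma card_bigcup_disj (I U : finType) (B : {set I}) (F : I -> {set U}) :
  {in B &, forall i j, i != j -> [disjoint F i & F j]} ->
  #|\bigcup_(i in B) F i| = \sum_(i in B) #|F i|.
Proof.
move=> dis; pose F' i := if i \in B then F i else set0.
have -> : \bigcup_(i in B) F i = \bigcup_i F' i.
  by rewrite big_mkcond.
rewrite -sum1_card partition_disjoint_bigcup.
  rewrite [RHS]big_mkcond /=; apply: eq_bigr => i _; rewrite /F' sum1_card.
  by case: (i \in B); rewrite ?cards0.
move=> i j nij; rewrite /F'; case Hi: (i \in B); case Hj: (j \in B);
  rewrite -?setI_eq0 ?set0I ?setI0 //; rewrite setI_eq0; exact: dis.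
Qed.

Lemma disjP (U : finType) (A B : {set U}) :
  reflect (forall x, x \in A -> x \in B -> False) [disjoint A & B].
Proof.
rewrite disjoints_subset; apply: (iffP subsetP) => H x xA.
  by move=> xB; move: (H x xA); rewrite inE xB.
by rewrite inE; apply/negP => xB; apply: (H x xA xB).
Qed.

Section S.
Variables (T : finType) (e : rel T) (esy : symmetric e) (eirr : irreflexive e).

Lemma edge2 (x y : T) : is_edge e [set x; y] = (x != y) && e x y.
Proof.
rewrite /is_edge cards2; apply/andP/andP => [[c /forallP H]|[nxy exy]].
  have nxy: x != y by move: c; case: (x == y).
  split => //; move: (H x) => /implyP/(_ (set21 _ _))/forallP/(_ y).
  by move=> /implyP/(_ (set22 _ _))/implyP/(_ nxy).
split; first by rewrite nxy.
apply/forallP=> a; apply/implyP => /set2P[]->; apply/forallP=> b;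
  apply/implyP=>/set2P[]->; rewrite ?eqxx //= ?exy ?implybT //.
by rewrite -(esy x y) exy implybT.
Qed.

Lemma is_edgeP (s : {set T}) : is_edge e s -> exists x y, [/\ x != y, e x y & s = [set x; y]].
Proof.
move=> H; move: (H) => /andP[/cards2P[x [y [nxy sE]]] _]; exists x, y.
by move: H; rewrite sE edge2 => /andP[? ?]; split.
Qed.

Lemma setD2 (x y z : T) : y != x -> y != z -> [set x; y] :\: [set x; z] = [set y].
Proof.
move=> yx yz; apply/setP=> w; rewrite !inE.
case: (eqVneq w y) => [->|nwy]; first by rewrite (negbTE yx) (negbTE yz).
by rewrite ?orbF; case: (w == x); rewrite ?andbF.
Qed.

Lemma edge_rot (s : {set T}) x : is_edge e s -> x \in s -> exists y, [/\ y != x, e x y & s = [set x; y]].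
Proof.
move=> /is_edgeP[a [b [nab eab ->]]] /set2P[]->.
  by exists b; rewrite eq_sym nab eab.
by exists a; rewrite nab -(esy a b) eab setUC.
Qed.

Lemma edge_meet1 (s t : {set T}) x : is_edge e s -> is_edge e t -> s != t -> x \in s -> x \in t ->
  #|s :\: t| == 1.
Proof.
move=> es et nst xs xt.
have [y [yx _ sE]] := edge_rot es xs; have [z [zx _ tE]] := edge_rot et xt.
have yz: y != z by apply: contraNneq nst => yz; rewrite sE tE yz.
by rewrite sE tE setD2 ?cards1.
Qed.

Lemma meet_of1 (s t : {set T}) : is_edge e s -> #|s :\: t| == 1 -> exists x, (x \in s) && (x \in t).
Proof.
move=> /andP[c _] H; apply/existsP; apply: contraTT H => /existsPn H.
have dj : [disjoint s & t] by apply/disjP => x xs xt; move: (H x); rewrite xs xt.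
by rewrite (setDidPl dj) (eqP c).
Qed.


Lemma partA (B : {set T * {set T}}) : strongly_disjoint e B ->
  [/\ self_disjoint e (bedges B), #|bedges B| = nflowers B
        & #|cover (bedges B)| = nflowers B + #|B|].
Proof.
case/andP => /andP[/forallP bq /forallP dj] /existsP[f /andP[/forallP fP im]].
have own : forall b b' z, b \in B -> b' \in B -> z \in bvert b -> z \in bvert b' -> b = b'.
  move=> b b' z Hb Hb' zb zb'; case: (eqVneq b b') => // nb.
  by move: (dj b) => /implyP/(_ Hb)/forallP/(_ b')/implyP/(_ Hb')/implyP/(_ nb)/disjP/(_ z zb zb').
have bqP : forall b, b \in B -> (b.2 != set0) /\ (forall y, y \in b.2 -> e b.1 y).
  move=> b Hb; move: (bq b) => /implyP/(_ Hb)/andP[ne /forallP H]; split => // y yb.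
  by move: (H y) => /implyP/(_ yb).
have rnf : forall b y, b \in B -> y \in b.2 -> y != b.1.
  by move=> b y Hb yb; apply/eqP => yE; have := (bqP b Hb).2 y yb; rewrite yE eirr.
have inr : forall b : T * {set T}, b.1 \in bvert b by move=> b; rewrite /bvert setU11.
have inf : forall (b : T * {set T}) y, y \in b.2 -> y \in bvert b.
  by move=> b y yb; rewrite /bvert setU1r.
have bE : bedges B = \bigcup_(b in B) [set [set b.1; y] | y in b.2].
  apply/setP => s; apply/imsetP/bigcupP.
  - case=> p; rewrite inE => /existsP[b /andP[Hb /andP[/eqP p1 p2]]] ->.
    by exists b => //; apply/imsetP; exists p.2 => //; rewrite p1.
  - case=> b Hb /imsetP[y yb ->]; exists (b.1, y) => //; rewrite inE; apply/existsP.
    by exists b; rewrite Hb eqxx yb.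
have bedgesP : forall s, s \in bedges B -> exists b y, [/\ b \in B, y \in b.2 & s = [set b.1; y]].
  by move=> s; rewrite bE => /bigcupP[b Hb /imsetP[y yb ->]]; exists b, y.
have inE2 : forall b y, b \in B -> y \in b.2 -> [set b.1; y] \in bedges B.
  by move=> b y Hb yb; rewrite bE; apply/bigcupP; exists b => //; exact: imset_f.
have priv : forall b y t, b \in B -> y \in b.2 -> t \in bedges B -> y \in t -> t = [set b.1; y].
  move=> b y t Hb yb /bedgesP[b' [y' [Hb' y'b ->]]] /set2P[] yE.
  - have bb : b = b' by apply: (own _ _ y Hb Hb'); [exact: inf | rewrite yE; exact: inr].
    by move: (rnf _ _ Hb yb); rewrite yE bb eqxx.
  - have bb : b = b' by apply: (own _ _ y Hb Hb'); [exact: inf | rewrite yE; exact: inf].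
    by rewrite bb yE.
have E1 : edge_family e (bedges B).
  apply/forallP => s; apply/implyP => /bedgesP[b [y [Hb yb ->]]].
  by rewrite edge2 eq_sym rnf //= (bqP b Hb).2.
have SC : self_cond (bedges B).
  apply/forallP => s; apply/implyP => Hs; move: (Hs) => /bedgesP[b [y [Hb yb sE]]].
  apply/subsetPn; exists y; first by rewrite sE set22.
  rewrite /cover; apply/bigcupP => [[t /setD1P[nts Ht] yt]].
  by move: nts; rewrite (priv b y t Hb yb Ht yt) sE eqxx.
have fP' : forall b, b \in B -> f b \in b.2 by move=> b Hb; move: (fP b) => /implyP/(_ Hb).
set M := [set [set b.1; f b] | b in B] in im.
have SD : self_disjoint e (bedges B).
  rewrite /self_disjoint E1 SC /=; apply/existsP; exists M; rewrite im andbT.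
  apply/andP; split.
  - by apply/subsetP => s /imsetP[b Hb ->]; apply: inE2 => //; exact: fP'.
  - apply/forallP => s; apply/implyP => /setDP[Hs nM]; move: (Hs) => /bedgesP[b [y [Hb yb sE]]].
    apply/existsP; exists [set b.1; f b]; apply/andP; split; first exact: imset_f.
    rewrite sE setD2 ?cards1 //; first exact: rnf.
    by apply: contraNneq nM => yf; rewrite sE yf; exact: imset_f.
split => //.
- rewrite bE card_bigcup_disj.
  + rewrite /nflowers; apply: eq_bigr => b Hb; rewrite card_in_imset //.
    move=> y z yb zb /setP/(_ y); rewrite !inE eqxx orbT => /esym/orP[/eqP yE|/eqP //].
    by move: (rnf _ _ Hb yb); rewrite yE eqxx.
  + move=> b b' Hb Hb' nb; apply/disjP => s /imsetP[y yb ->] /imsetP[y' y'b] sE.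
    apply: (negP nb); apply/eqP; apply: (own _ _ b.1 Hb Hb' (inr b)).
    have: b.1 \in [set b'.1; y'] by rewrite -sE set21.
    by case/set2P => ->; [exact: inr | exact: inf].
- have cE : cover (bedges B) = \bigcup_(b in B) bvert b.
    apply/setP => z; apply/bigcupP/bigcupP.
    + case=> s /bedgesP[b [y [Hb yb ->]]] /set2P[]->; exists b => //; by [apply: inr | apply: inf].
    + case=> b Hb; rewrite /bvert => /setU1P[->|zb].
      * by exists [set b.1; f b]; [apply: inE2 => //; exact: fP' | exact: set21].
      * by exists [set b.1; z]; [exact: inE2 | exact: set22].
  rewrite cE card_bigcup_disj.
  + rewrite /nflowers -(sum1_card (mem B)) -big_split /=; apply: eq_bigr => b Hb.
    rewrite /bvert cardsU1 addnC; congr (_ + _).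
    by case: (boolP (b.1 \in b.2)) => // /(rnf _ _ Hb); rewrite eqxx.
  + move=> b b' Hb Hb' nb.
    by move: (dj b) => /implyP/(_ Hb)/forallP/(_ b')/implyP/(_ Hb')/implyP/(_ nb).
Qed.


Lemma partB (S : {set {set T}}) : self_disjoint e S ->
  exists B, strongly_disjoint e B /\ bedges B = S.
Proof.
case/andP => /andP[/forallP EF /forallP SC] /existsP[S0 /andP[/andP[/subsetP sub IMS0] /forallP nb]].
have es : forall s, s \in S -> is_edge e s by move=> s Hs; move: (EF s) => /implyP/(_ Hs).
have sc : forall s, s \in S -> exists2 p, p \in s & p \notin cover (S :\ s).
  by move=> s Hs; move: (SC s) => /implyP/(_ Hs)/subsetPn[p ps pn]; exists p.
have cov : forall s t x, t \in S -> t != s -> x \in t -> x \in cover (S :\ s).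
  by move=> s t x Ht nts xt; rewrite /cover; apply/bigcupP; exists t => //; rewrite in_setD1 nts Ht.
have cov2 : forall s a b, s \in S -> a \in s -> b \in s -> a != b ->
    a \in cover (S :\ s) -> b \in cover (S :\ s) -> False.
  move=> s a b Hs a_s b_s nab ca cb; have [p ps pn] := sc s Hs.
  have [y [ya _ sE]] := edge_rot (es s Hs) a_s.
  move: ps; rewrite sE => /set2P[] pE; first by rewrite pE ca in pn.
  move: b_s; rewrite sE => /set2P[] bE; first by rewrite bE eqxx in nab.
  by rewrite pE -bE cb in pn.
have dis0 : forall t1 t2 x, t1 \in S0 -> t2 \in S0 -> x \in t1 -> x \in t2 -> t1 = t2.
  move: IMS0 => /andP[_ /forallP D] t1 t2 x H1 H2 x1 x2; case: (eqVneq t1 t2) => // n12.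
  by move: (D t1) => /implyP/(_ H1)/forallP/(_ t2)/implyP/(_ H2)/implyP/(_ n12)/disjP/(_ x x1 x2).
case: (eqVneq S0 set0) => [S00|/set0Pn[t0 Ht0]].
  have S0E : S = set0.
    apply/setP => s; rewrite inE; apply/negP => Hs.
    case: (boolP (s \in S0)); first by rewrite S00 inE.
    move=> nS0; move: (nb s) => /implyP; rewrite inE nS0 Hs => /(_ isT)/existsP[t /andP[]].
    by rewrite S00 inE.
  exists set0; split.
  + apply/andP; split; first by apply/andP; split; apply/forallP => b; rewrite inE.
    apply/existsP; exists [ffun b => b.1]; apply/andP; split; first by apply/forallP => b; rewrite inE.
    rewrite imset0; apply/andP; split; [apply/andP; split|]; apply/forallP => s; rewrite ?inE //.
    apply/implyP => /andP[ed]; rewrite /cover big_set0 subset0 => /eqP s0.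
    by move: ed; rewrite s0 /is_edge cards0.
  + apply/setP => s; rewrite S0E inE; apply/negP => /imsetP[p]; rewrite inE => /existsP[b].
    by rewrite inE.
have [x0 _] : exists x0 : T, True.
  by have [x0 _] := is_edgeP (es t0 (sub t0 Ht0)); exists x0.
have : forall t, exists r : T, t \in S0 ->
    exists2 p, t = [set r; p] & (p != r) && (p \notin cover (S :\ t)).
  move=> t; case: (boolP (t \in S0)) => Ht; last by exists x0.
  have [p pt pn] := sc t (sub t Ht).
  have [y [yp _ tE]] := edge_rot (es t (sub t Ht)) pt.
  by exists y => _; exists p; [rewrite tE setUC | rewrite eq_sym yp pn].
case/fin_all_exists => rt rtP.
have hub : forall t s x, t \in S0 -> s \in S -> s != t -> x \in s -> x \in t -> x = rt t.
  move=> t s x Ht Hs nst xs xt; have [p tE /andP[_ pn]] := rtP t Ht.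
  rewrite tE in xt; case/set2P: xt => // xp.
  by move: pn; rewrite -xp (cov t s x Hs nst xs).
have rtin : forall t, t \in S0 -> rt t \in t.
  by move=> t Ht; have [p tE _] := rtP t Ht; have := set21 (rt t) p; rewrite -tE.
pose fl x := [set y | [set x; y] \in S].
have flP : forall x y, (y \in fl x) = ([set x; y] \in S) by move=> x y; rewrite inE.
have flne : forall x y, y \in fl x -> y != x.
  move=> x y; rewrite flP => /es; rewrite edge2 => /andP[]; by rewrite eq_sym.
pose B := [set (rt t, fl (rt t)) | t in S0].
have BP : forall b, b \in B -> exists2 t, t \in S0 & b = (rt t, fl (rt t)).
  by move=> b /imsetP[t Ht ->]; exists t.
have inB : forall t, t \in S0 -> (rt t, fl (rt t)) \in B by move=> t Ht; apply: imset_f.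
have pP : forall t, t \in S0 -> exists2 p, t = [set rt t; p] & p \in fl (rt t).
  move=> t Ht; have [p tE _] := rtP t Ht; exists p => //; by rewrite flP -tE sub.
have caseB : forall t1 t2, t1 \in S0 -> t2 \in S0 -> rt t1 \in fl (rt t2) -> t1 = t2.
  move=> t1 t2 H1 H2 h; case: (eqVneq t1 t2) => // n12; exfalso.
  have Hs : [set rt t2; rt t1] \in S by rewrite -flP.
  case: (eqVneq [set rt t2; rt t1] t2) => [sE|ns2].
    by apply: (negP n12); apply/eqP; apply: (dis0 _ _ (rt t1) H1 H2 (rtin _ H1)); rewrite -sE set22.
  case: (eqVneq [set rt t2; rt t1] t1) => [sE|ns1].
    by apply: (negP n12); apply/eqP; apply: (dis0 _ _ (rt t2) H1 H2 _ (rtin _ H2)); rewrite -sE set21.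
  apply: (cov2 _ (rt t2) (rt t1) Hs (set21 _ _) (set22 _ _)).
  - by rewrite eq_sym; apply: flne.
  - by apply: (cov _ t2) => //; [exact: sub | rewrite eq_sym | exact: rtin].
  - by apply: (cov _ t1) => //; [exact: sub | rewrite eq_sym | exact: rtin].
have djB : forall t1 t2 z, t1 \in S0 -> t2 \in S0 -> z \in bvert (rt t1, fl (rt t1)) ->
    z \in bvert (rt t2, fl (rt t2)) -> t1 = t2.
  move=> t1 t2 z H1 H2; rewrite /bvert /= => /setU1P[z1|z1] /setU1P[z2|z2].
  - by apply: (dis0 _ _ z H1 H2); [rewrite z1; exact: rtin | rewrite z2; exact: rtin].
  - by apply: caseB => //; rewrite -z1.
  - by apply/esym; apply: caseB => //; rewrite -z2.
  case: (eqVneq t1 t2) => // n12; exfalso.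
  have n12r : rt t1 != rt t2.
    apply: contraNneq n12 => rE; apply/eqP; apply: (dis0 _ _ (rt t1) H1 H2 (rtin _ H1)).
    by rewrite rE; exact: rtin.
  have Hs1 : [set rt t1; z] \in S by rewrite -flP.
  have Hs2 : [set rt t2; z] \in S by rewrite -flP.
  have s12 : [set rt t1; z] != [set rt t2; z].
    apply/negP => /eqP sE; have : rt t1 \in [set rt t2; z] by rewrite -sE set21.
    case/set2P => rE; first by rewrite rE eqxx in n12r.
    by move: (flne _ _ z1); rewrite rE eqxx.
  case: (eqVneq [set rt t1; z] t1) => [e1|n1].
    have := hub t1 _ z H1 Hs2; rewrite -e1 eq_sym s12 set22 set22 => /(_ isT isT isT) zr.
    have zt1 : z \in t1 by rewrite -e1 set22.
    have ne2 : [set rt t2; z] != t1 by rewrite -e1 eq_sym.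
    have zrr := hub t1 _ z H1 Hs2 ne2 (set22 _ _) zt1.
    by move: (flne _ _ z1); rewrite zrr eqxx.
  apply: (cov2 _ (rt t1) z Hs1 (set21 _ _) (set22 _ _)).
  - by rewrite eq_sym; apply: flne.
  - by apply: (cov _ t1) => //; [exact: sub | rewrite eq_sym | exact: rtin].
  - by apply: (cov _ [set rt t2; z]) => //; [rewrite eq_sym | exact: set22].
exists B; split.
- apply/andP; split; first (apply/andP; split).
  + apply/forallP => b; apply/implyP => /BP[t Ht ->]; rewrite /bouquet /=; apply/andP; split.
      by apply/set0Pn; have [p _ pf] := pP t Ht; exists p.
    apply/forallP => y; apply/implyP => yf; move: (yf); rewrite flP => /es.
    by rewrite edge2 => /andP[].
  + apply/forallP => b; apply/implyP => /BP[t1 H1 ->]; apply/forallP => b'.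
    apply/implyP => /BP[t2 H2 ->]; apply/implyP => nb'; apply/disjP => z z1 z2.
    by move: nb'; rewrite (djB t1 t2 z H1 H2 z1 z2) eqxx.
  + have : forall b, exists y : T, b \in B -> (y \in b.2) && ([set b.1; y] \in S0).
      move=> b; case: (boolP (b \in B)) => Hb; last by exists b.1.
      have [t Ht bE] := BP b Hb; have [p tE pf] := pP t Ht; exists p => _.
      by rewrite bE /= pf -tE Ht.
    case/fin_all_exists => g gP.
    apply/existsP; exists [ffun b => g b]; apply/andP; split.
      by apply/forallP => b; apply/implyP => Hb; rewrite ffunE; case/andP: (gP b Hb).
    have -> : [set [set b.1; [ffun b => g b] b] | b in B] = S0; last exact: IMS0.
    apply/setP => t; apply/imsetP/idP.
      by case=> b Hb ->; rewrite ffunE; case/andP: (gP b Hb).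
    move=> Ht; exists (rt t, fl (rt t)); first exact: inB.
    rewrite ffunE; have /andP[_ H'] := gP _ (inB t Ht).
    by apply: (dis0 _ _ (rt t) Ht H'); [exact: rtin | rewrite /= set21].
- apply/setP => s; apply/imsetP/idP.
  + case=> q; rewrite inE => /existsP[b /andP[/BP[t Ht ->] /andP[/eqP q1 q2]]] ->.
    by rewrite q1 -flP.
  + move=> Hs.
    have [t Ht [y sE]] : exists2 t, t \in S0 & exists y, s = [set rt t; y].
      case: (boolP (s \in S0)) => H0.
        by exists s => //; have [p tE pf] := pP s H0; exists p.
      move: (nb s) => /implyP; rewrite inE H0 Hs => /(_ isT)/existsP[t /andP[Ht m1]].
      have [x /andP[xs xt]] := meet_of1 (es s Hs) m1.
      have nst : s != t by apply: contraNneq H0 => ->.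
      have xr := hub t s x Ht Hs nst xs xt.
      have [y [_ _ sE]] := edge_rot (es s Hs) xs.
      by exists t => //; exists y; rewrite sE xr.
    exists (rt t, y) => //; rewrite inE; apply/existsP; exists (rt t, fl (rt t)).
    by rewrite inB //= eqxx flP -sE Hs.
Qed.

Lemma semi_disj (S : {set {set T}}) : self_semi_disjoint e S -> self_disjoint e S.
Proof.
case/andP => /andP[EF SC] /existsP[S0 /andP[/andP[s0S SM] NB]].
rewrite /self_disjoint EF SC /=.
have es : forall s, s \in S -> is_edge e s by move=> s Hs; move/forallP: EF => /(_ s)/implyP/(_ Hs).
have sc : forall s, s \in S -> exists2 p, p \in s & p \notin cover (S :\ s).
  by move=> s Hs; move/forallP: SC => /(_ s)/implyP/(_ Hs)/subsetPn[p ps pn]; exists p.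
have cov : forall s t x, t \in S -> t != s -> x \in t -> x \in cover (S :\ s).
  by move=> s t x Ht nts xt; rewrite /cover; apply/bigcupP; exists t => //; rewrite in_setD1 nts Ht.
have cov2 : forall s a b, s \in S -> a \in s -> b \in s -> a != b ->
    a \in cover (S :\ s) -> b \in cover (S :\ s) -> False.
  move=> s a b Hs a_s b_s nab ca cb; have [p ps pn] := sc s Hs.
  have [y [ya _ sE]] := edge_rot (es s Hs) a_s.
  move: ps; rewrite sE => /set2P[] pE; first by rewrite pE ca in pn.
  move: b_s; rewrite sE => /set2P[] bE; first by rewrite bE eqxx in nab.
  by rewrite pE -bE cb in pn.
pose P := [pred X : {set {set T}} | (X \subset S0) &&
   [forall s in S :\: X, exists s' in X, #|s :\: s'| == 1]].
have PS0 : P S0 by rewrite inE subxx NB.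
case: (@arg_minnP _ S0 P (fun X => #|X|) PS0) => X /andP[XS0 XN] minX.
have XS : X \subset S by apply: subset_trans XS0 s0S.
apply/existsP; exists X; rewrite XS XN andbT /=.
apply/andP; split.
  apply/andP; split.
    by apply/forallP => s; apply/implyP => Hs; apply: es; apply: (subsetP XS).
  apply/forallP => s; apply/implyP => /andP[ed sc'].
  have sS0 : s \in S0.
    move/andP: SM => [_ /forallP/(_ s)/implyP]; apply; rewrite ed /=.
    apply: subset_trans sc' _; rewrite /cover; apply/subsetP => z /bigcupP[t tX zt].
    by apply/bigcupP; exists t => //; apply: (subsetP XS0).
  case: (boolP (s \in X)) => // nsX; exfalso.
  have Hs : s \in S by apply: (subsetP s0S).
  have [p ps pn] := sc s Hs.
  move: (subsetP sc' p ps); rewrite /cover => /bigcupP[t tX pt].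
  have ts : t != s by apply: contraNneq nsX => <-.
  by move: pn; rewrite (cov s t p (subsetP XS t tX) ts pt).
apply/forallP => t1; apply/implyP => H1; apply/forallP => t2; apply/implyP => H2.
apply/implyP => n12; apply/disjP => c c1 c2.
have Ht1 : t1 \in S by apply: (subsetP XS).
have Ht2 : t2 \in S by apply: (subsetP XS).
pose X' := X :\ t2.
have t1X' : t1 \in X' by rewrite in_setD1 H1 andbT.
have PX' : P X'.
  rewrite inE; apply/andP; split.
    by apply: subset_trans XS0; apply: subD1set.
  apply/forallP => s; apply/implyP => /setDP[Hs nsX'].
  have ns1 : s != t1 by apply: contraNneq nsX' => ->.
  case: (boolP (c \in s)) => cs.
    by apply/existsP; exists t1; rewrite t1X' /=; apply: (edge_meet1 (es s Hs) (es t1 Ht1) ns1 cs c1).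
  have ns2 : s != t2 by apply: contraNneq cs => ->.
  have nsX : s \notin X by move: nsX'; rewrite in_setD1 ns2.
  move/forallP: XN => /(_ s)/implyP; rewrite inE nsX Hs => /(_ isT)/existsP[s' /andP[s'X m1]].
  case: (eqVneq s' t2) => [s't2|ns't2].
    exfalso; rewrite s't2 in m1.
    have [w /andP[ws wt2]] := meet_of1 (es s Hs) m1.
    have wc : c != w by apply: contraNneq cs => ->.
    apply: (cov2 t2 c w Ht2 c2 wt2 wc).
      by apply: (cov _ t1) => //; rewrite eq_sym.
    by apply: (cov _ s).
  by apply/existsP; exists s'; rewrite in_setD1 ns't2 s'X.
have := minX X' PX'; rewrite /X' (cardsD1 t2 X) H2 /=.
by rewrite ltnn.
Qed.

End S.

Theorem proposition1p4 (T : finType) (e : rel T)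
  (esym : symmetric e) (eirr : irreflexive e) :
  ((forall B : {set T * {set T}}, strongly_disjoint e B ->
      [/\ self_disjoint e (bedges B), #|bedges B| = nflowers B
        & #|cover (bedges B)| = nflowers B + #|B|]) /\
   (forall (S : {set {set T}}) (j : nat), self_disjoint e S ->
      #|cover S| = #|S| + j ->
      exists B : {set T * {set T}},
        [/\ strongly_disjoint e B, bedges B = S, nflowers B = #|S| & #|B| = j]))
  /\ (forall S : {set {set T}}, self_semi_disjoint e S -> self_disjoint e S)
  /\ (d1G e = d2G e /\ d2G e = dG e)
  /\ (d'1G e = d'2G e /\ d'2G e = d'G e).
Proof.
have pA := @partA T e esym eirr.
have pB := @partB T e esym.
have sd := @semi_disj T e esym.
have conv : forall S, self_disjoint e S -> exists B, [/\ strongly_disjoint e B, bedges B = S,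
    nflowers B = #|S| & #|cover S| = #|S| + #|B|].
  move=> S HS; have [B [HB BE]] := pB S HS; have [_ c1 c2] := pA B HB.
  by exists B; split => //; rewrite -BE ?c1 ?c2 ?c1.
have eqP12 : forall S, self_semi_disjoint e S = self_disjoint e S.
  move=> S; apply/idP/idP; first exact: sd.
  rewrite /self_semi_disjoint.
  case/andP => /andP[-> ->] /existsP[S0 /andP[/andP[h1 /andP[h2 _]] h3]].
  by apply/existsP; exists S0; rewrite h1 h2 h3.
have d12 : d1G e = d2G e by rewrite /d1G /d2G; apply: eq_bigl => S; rewrite eqP12.
have d'12 : d'1G e = d'2G e by rewrite /d'1G /d'2G; apply: eq_bigl => S; rewrite eqP12.
split; [split|split; [exact: sd|split; split => //]].
- exact: pA.
- move=> S j HS Hc; have [B [HB BE nB cE]] := conv S HS; exists B; split => //.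
  by move: Hc; rewrite cE => /addnI.
- rewrite -d12; apply/eqP; rewrite eqn_leq; apply/andP; split.
    apply/bigmax_leqP => S HS; have [B [HB _ nB _]] := conv S HS; rewrite -nB.
    exact: leq_bigmax_cond.
  apply/bigmax_leqP => B HB; have [h1 h2 _] := pA B HB; rewrite -h2.
  exact: leq_bigmax_cond.
- rewrite -d'12; apply/eqP; rewrite eqn_leq; apply/andP; split.
    apply/bigmax_leqP => S HS; have [B [HB _ nB cE]] := conv S HS; rewrite cE addKn.
    exact: leq_bigmax_cond.
  apply/bigmax_leqP => B HB; have [h1 h2 h3] := pA B HB.
  have -> : #|B| = #|cover (bedges B)| - #|bedges B| by rewrite h3 h2 addKn.
  exact: leq_bigmax_cond.
Qed.
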